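(* Let $n>1$ and let $\mathbf M_n=(M_n,\vee,\wedge,0,1)$ be the lattice with $M_n=\{0,a_1,\dots,a_n,1\}$, where $a_1,\dots,a_n$ are pairwise incomparable atoms and coatoms. Then for all $a,b,c\in M_n$: $a\wedge b\le c$ if and only if $\{a\}\le_1 b\to c$.
   Context: For $a\in L$, $a^+:=\{x\in L\mid a\vee x=1,\ a\wedge x=0\}$ (the set of all complements of $a$). For $a,b\in L$, $a\to b:=\{x\vee(a\wedge b)\mid x\in a^+\}$. For $A,B\subseteq L$, $A\le_1B$ means that for every $x\in A$ there exists $y\in B$ with $x\le y$. *)

(* Defs.v *)
From mathcomp Require Import all_boot.
Set Implicit Arguments. Unset Strict Implicit. Unset Printing Implicit Defensive.

Inductive Mn (n : nat) : Type := MBot | MAtom of 'I_n | MTop.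
Arguments MBot {n}. Arguments MTop {n}.

Definition Mjoin n (x y : Mn n) : Mn n :=
  match x, y with
  | MBot, _ => y
  | _, MBot => x
  | MAtom i, MAtom j => if i == j then MAtom i else MTop
  | _, _ => MTop
  end.

Definition Mmeet n (x y : Mn n) : Mn n :=
  match x, y with
  | MTop, _ => y
  | _, MTop => x
  | MAtom i, MAtom j => if i == j then MAtom i else MBot
  | _, _ => MBot
  end.

Definition Mle n (x y : Mn n) : Prop := Mmeet x y = x.

Definition Mcompl n (a : Mn n) : Mn n -> Prop :=
  fun x => Mjoin a x = MTop /\ Mmeet a x = MBot.

Definition Mimpl n (a b : Mn n) : Mn n -> Prop :=
  fun z => exists2 x, Mcompl a x & z = Mjoin x (Mmeet a b).

Definition Mle1 n (A B : Mn n -> Prop) : Prop :=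
  forall x, A x -> exists2 y, B y & Mle x y.

(* Main.v *)
Require Import Defs.
From mathcomp Require Import all_boot.

Lemma other_idx (n : nat) (hn : 1 < n) (i : 'I_n) : exists j : 'I_n, j != i.
Proof.
have h0 : 0 < n by apply: ltnW.
case: (eqVneq (nat_of_ord i) 0) => Hi.
- exists (Ordinal hn); apply/eqP => /(congr1 val) /=; rewrite Hi.  done.
- exists (Ordinal h0); apply/eqP => /(congr1 val) /= H; by rewrite -H in Hi.
Qed.

Ltac crush :=
  repeat (match goal with
  | |- context[?u == ?v] => case: (u =P v) => ?; subst
  | H : context[?u == ?v] |- _ => move: H
  end; rewrite /=; try done); try done.

Theorem proposition5 (n : nat) (hn : 1 < n) (a b c : Mn n) :
  Mle (Mmeet a b) c <-> Mle1 (fun x => x = a) (Mimpl b c).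
Proof.
split.
- move=> H x ->.
  case: b H => [|i|] H.
  + exists MTop.
      exists MTop; first by split.
      by clear H; case: c.
    by clear H; case: a.
  + case: (@other_idx n hn i) => j Hj.
    have cx : Mcompl (MAtom i) (MAtom j).
      by rewrite /Mcompl /= eq_sym (negbTE Hj).
    have gen : Mmeet (MAtom i) c = MBot -> Mle (Mmeet a (MAtom i)) c ->
        exists2 y, Mimpl (MAtom i) c y & Mle a y.
      move=> Hm; clear H; case: a => [|l|] H'.
      * exists (MAtom j); last by [].
        by exists (MAtom j) => //; rewrite Hm.
      * move: H'; case: (l =P i) => [->|/eqP Hl].
        - have -> : Mmeet (MAtom i) (MAtom i) = MAtom i by rewrite /= eqxx.
          by rewrite /Mle Hm.
        - move=> _; exists (MAtom l); last by rewrite /Mle /= eqxx.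
          exists (MAtom l); last by rewrite Hm.
          by rewrite /Mcompl /= eq_sym (negbTE Hl).
      * by move: H'; rewrite /Mle Hm.
    have gtop : Mmeet (MAtom i) c = MAtom i ->
        exists2 y, Mimpl (MAtom i) c y & Mle a y.
      move=> Hm; exists MTop; last by clear; case: a.
      exists (MAtom j) => //; rewrite Hm /= (negbTE Hj) //.
    case: c H gen gtop => [|k|] H gen gtop.
    * by apply: gen.
    * case: (i =P k) => [Hik|/eqP Hik].
      - apply: gtop; by rewrite /= Hik eqxx.
      - apply: gen => //=; by rewrite (negbTE Hik).
    * by apply: gtop.
  + exists c; first by exists MBot; [split | case: c {H}].
    by case: a H.
- move=> /(_ a erefl) [y [x [Hx1 Hx2] ->] Hle].
  move: Hx1 Hx2 Hle; rewrite /Mle.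
  case: a => [|i|]; case: b => [|j|]; case: c => [|k|]; case: x => [|l|] //=;
  crush.
Qed.
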